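(* For every $X\in\{\mathsf{T},\mathsf{S}\}^*$ and every initial preference formula, $\succ_{X\mathsf{T}}\subseteq\succ_{X\mathsf{T}\mathsf{S}\mathsf{T}}$.
   Context: Fix attribute–taxonomy pairs $A_1{:}T_1,\dots,A_d{:}T_d$ with distinct attribute names, where each taxonomy $T_i=(V_i,\le_{V_i})$ is a poset. A t-tuple over a t-schema $S\subseteq\{A_1{:}T_1,\dots,A_d{:}T_d\}$ maps each $A_i$ in $S$ to a value of $V_i$; $\mathcal{D}$ is the set of all t-tuples over all such t-schemas. A preference relation is a binary relation $\succeq$ on $\mathcal{D}$; its strict part is $t_1\succ t_2$ iff $t_1\succeq t_2$ and not $t_2\succeq t_1$. Preferences are given by a formula $F(x,y)=\bigvee_i P_i(x,y)$, a disjunction of statements; each statement $P_i$ is a disjunction of clauses, each clause a satisfiable conjunction of atoms of the forms $x[A_i]\le_{V_i} v$, $x[A_i]\not\le_{V_i} v$, $y[A_i]\le_{V_i} v$, $y[A_i]\not\le_{V_i} v$; the formula induces $t_1\succeq t_2\iff F(t_1,t_2)$. Operator $\mathsf{T}$ maps a formula to one inducing the transitive closure over $\mathcal{D}$ of the induced relation. Operator $\mathsf{S}$ (specificity-based refinement): repeat rounds; in a round, for each statement $P_i$ let $\mathrm{Impl}(P_i)$ be the set of statements $P_j$ such that $P_j(t_2,t_1)\Rightarrow P_i(t_1,t_2)$ for all $t_1,t_2\in\mathcal{D}$ but not conversely; simultaneously replace every $P_i$ with nonempty $\mathrm{Impl}(P_i)$ by $P_i(x,y)\wedge\bigwedge_{P_j\in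 \mathrm{Impl}(P_i)}\neg P_j(y,x)$; stop when no $\mathrm{Impl}$ set is nonempty. After each operator, contradictory clauses and subsumed statements are removed. For $X\in\{\mathsf{T},\mathsf{S}\}^*$, $\succeq_X$ (strict part $\succ_X$) is the relation induced by applying the operators of $X$ in order to the initial formula. *)

(* Defs.v *)
From Stdlib Require Import Relations.
From Stdlib Require List.
From mathcomp Require Import all_boot.
Set Implicit Arguments.
Unset Strict Implicit.
Unset Printing Implicit Defensive.

(* A fixed family of attribute-taxonomy pairs A_1:T_1, ..., A_d:T_d.
   Attribute A_i is identified with the index i : 'I_d (so names are distinct);
   each taxonomy T_i = (V_i, <=_{V_i}) is a poset. *)
Record taxonomies := Taxonomies {
  nattr : nat;
  tval : 'I_nattr -> Type;
  tle : forall i, tval i -> tval i -> Prop;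
  tle_refl : forall i (v : tval i), tle v v;
  tle_antisym : forall i (v w : tval i), tle v w -> tle w v -> v = w;
  tle_trans : forall i (u v w : tval i), tle u v -> tle v w -> tle u w
}.

Section Defs.
Variable T : taxonomies.

(* A t-tuple over the t-schema {i | t i <> None}; the type of all of them is D. *)
Definition ttuple := forall i : 'I_(nattr T), option (tval i).

(* Atoms: x[A_i] <= v (a_x = true, a_pos = true), x[A_i] not<= v
   (a_x = true, a_pos = false), and the same for y (a_x = false). *)
Record atom := Atom {
  a_x : bool;
  a_attr : 'I_(nattr T);
  a_val : tval a_attr;
  a_pos : bool
}.

Definition eval_atom (a : atom) (t1 t2 : ttuple) : Prop :=
  match (if a_x a then t1 else t2) (a_attr a) with
  | Some w => if a_pos a then tle w (a_val a) else ~ tle w (a_val a)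
  | None => False
  end.

Definition clause := seq atom.
Definition eval_clause (c : clause) (t1 t2 : ttuple) : Prop :=
  forall a, List.In a c -> eval_atom a t1 t2.
Definition clause_sat (c : clause) : Prop :=
  exists t1 t2, eval_clause c t1 t2.

(* Syntactic statements (disjunctions of clauses) and formulas
   (disjunctions of statements). *)
Definition sstatement := seq clause.
Definition sformula := seq sstatement.
Definition well_formed (F : sformula) : Prop :=
  forall s c, List.In s F -> List.In c s -> clause_sat c.

Definition stmt := ttuple -> ttuple -> Prop.
Definition formula := seq stmt.

Definition eval_sstatement (s : sstatement) : stmt :=
  fun t1 t2 => exists c, List.In c s /\ eval_clause c t1 t2.
Definition sem (F : sformula) : formula := map eval_sstatement F.

Definition Fnil : stmt := fun _ _ => False.

Definition induced (F : formula) : relation ttuple :=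
  fun t1 t2 => exists k, k < size F /\ nth Fnil F k t1 t2.

Definition strict (R : relation ttuple) : relation ttuple :=
  fun t1 t2 => R t1 t2 /\ ~ R t2 t1.

Definition implies (P Q : stmt) : Prop := forall t1 t2, P t1 t2 -> Q t1 t2.

(* Removal of subsumed statements: keep a subsequence G of F such that every
   removed statement is subsumed by a kept one and no kept statement is
   subsumed by another kept one.  (Removal of contradictory clauses does not
   change the denotation of a statement.) *)
Definition cleanup (F G : formula) : Prop :=
  exists m : bitseq, size m = size F /\ G = mask m F /\
    (forall k, k < size F -> nth false m k = false ->
       exists l, l < size G /\ implies (nth Fnil F k) (nth Fnil G l)) /\
    (forall a b, a < size G -> b < size G -> a <> b ->
       ~ implies (nth Fnil G a) (nth Fnil G b)).

Definition T_result (F G : formula) : Prop :=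
  forall t1 t2, induced G t1 t2 <-> clos_trans ttuple (induced F) t1 t2.

Definition in_Impl (F : formula) (i j : nat) : Prop :=
  (forall t1 t2, nth Fnil F j t2 t1 -> nth Fnil F i t1 t2) /\
  ~ (forall t1 t2, nth Fnil F i t1 t2 -> nth Fnil F j t2 t1).

Definition S_round (F : formula) : formula :=
  map (fun i => fun t1 t2 =>
         nth Fnil F i t1 t2 /\
         (forall j, j < size F -> in_Impl F i j -> ~ nth Fnil F j t2 t1))
      (iota 0 (size F)).

Definition S_stop (F : formula) : Prop :=
  forall i j, i < size F -> j < size F -> ~ in_Impl F i j.

Inductive S_rounds : formula -> formula -> Prop :=
| S_done F : S_stop F -> S_rounds F F
| S_more F H : ~ S_stop F -> S_rounds (S_round F) H -> S_rounds F H.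

Inductive op := OpT | OpS.

Definition step (o : op) (F G : formula) : Prop :=
  match o with
  | OpT => exists G0, T_result F G0 /\ cleanup G0 G
  | OpS => exists G0, S_rounds F G0 /\ cleanup G0 G
  end.

Inductive run : seq op -> formula -> formula -> Prop :=
| run_nil F : run [::] F F
| run_cons o X F G H : step o F G -> run X G H -> run (o :: X) F H.

End Defs.

(* Main.v *)
Require Import Defs.
From Stdlib Require Import Relations.
From mathcomp Require Import all_boot.

Set Implicit Arguments.
Section Aux.
Variable Tx : taxonomies.

Lemma In_nth_lt (s : formula Tx) k : k < size s -> List.In (nth (@Fnil Tx) s k) s.
Proof.
elim: s k => [|P s IH] [|k] //= H; first by left.
right; exact: IH.
Qed.

Lemma In_ex_nth (s : formula Tx) P : List.In P s -> exists k, k < size s /\ nth (@Fnil Tx) s k = P.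
Proof.
elim: s => [|Q s IH] //= [->|H]; first by exists 0.
have [k [Hk E]] := IH H; by exists k.+1.
Qed.

Lemma inducedE (F : formula Tx) t1 t2 :
  induced F t1 t2 <-> exists P, List.In P F /\ P t1 t2.
Proof.
split.
- move=> [k [Hk HP]]; exists (nth (@Fnil Tx) F k); split => //; exact: In_nth_lt.
- move=> [P [HI HP]]; have [k [Hk E]] := @In_ex_nth _ _ HI; exists k; by rewrite E.
Qed.

Lemma In_mask (m : bitseq) (F : formula Tx) P : List.In P (mask m F) -> List.In P F.
Proof.
elim: F m => [|Q F IH] [|b m] //=.
case: b => /= [[->|H]|H]; [by left|right; exact: IH H|right; exact: IH H].
Qed.

Lemma mask_In (m : bitseq) (F : formula Tx) k : k < size F -> nth false m k = true ->
  List.In (nth (@Fnil Tx) F k) (mask m F).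
Proof.
elim: F m k => [|Q F IH] [|b m] [|k] //= Hk Hb.
- by rewrite Hb /=; left.
- case: b => /=; [right|]; exact: IH.
Qed.

Lemma cleanup_induced {F G : formula Tx} : cleanup F G ->
  forall t1 t2, induced F t1 t2 <-> induced G t1 t2.
Proof.
move=> [m [Hs [-> [Hrem _]]]] t1 t2; split.
- move=> [k [Hk HP]].
  case Eb: (nth false m k).
  + apply/inducedE; exists (nth (@Fnil Tx) F k); split => //; exact: mask_In.
  + have [l [Hl Himp]] := Hrem k Hk Eb; exists l; split => //; exact: Himp.
- move/inducedE => [P [HI HP]]; apply/inducedE; exists P; split => //; exact: In_mask HI.
Qed.

Lemma S_round_sub (F : formula Tx) t1 t2 : induced (S_round F) t1 t2 -> induced F t1 t2.
Proof.
move=> [k [Hk HP]]; rewrite /S_round size_map size_iota in Hk.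
rewrite /S_round (nth_map 0) ?size_iota // nth_iota // add0n in HP.
by exists k; case: HP.
Qed.

Lemma S_round_keep (F : formula Tx) t1 t2 : induced F t1 t2 -> ~ induced F t2 t1 ->
  induced (S_round F) t1 t2.
Proof.
move=> [k [Hk HP]] Hn; exists k; rewrite /S_round size_map size_iota; split => //.
rewrite (nth_map 0) ?size_iota // nth_iota // add0n; split => // j Hj _ Hj2.
by apply: Hn; exists j.
Qed.

Lemma S_rounds_prop (F G : formula Tx) : S_rounds F G ->
  (forall t1 t2, induced G t1 t2 -> induced F t1 t2) /\
  (forall t1 t2, induced F t1 t2 -> ~ induced F t2 t1 -> induced G t1 t2).
Proof.
elim => [F' _|F' H' _ _ [IH1 IH2]]; first by split.
split.
- move=> t1 t2 h; apply: S_round_sub; exact: IH1.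
- move=> t1 t2 h1 h2; apply: IH2; first exact: S_round_keep.
  move=> h3; apply: h2; exact: S_round_sub.
Qed.

Lemma run_last (X : seq op) o (F G : formula Tx) : run (X ++ [:: o]) F G ->
  exists F', run X F F' /\ step o F' G.
Proof.
elim: X F => [|o' X IH] F /=.
- move=> h; inversion h as [|o1 X1 F1 G1 H1 hs hr]; subst.
  inversion hr; subst. exists F; split => //; constructor.
- move=> h; inversion h as [|o1 X1 F1 G1 H1 hs hr]; subst. have [F' [h1 h2]] := IH _ hr.
  exists F'; split => //; econstructor; eauto.
Qed.

Lemma stepT_trans (F G : formula Tx) : step OpT F G ->
  forall t1 t2 t3, induced G t1 t2 -> induced G t2 t3 -> induced G t1 t3.
Proof.
move=> [G0 [HT Hc]] t1 t2 t3 h1 h2.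
apply: (proj1 (cleanup_induced Hc t1 t3)); apply/(proj2 (HT t1 t3)).
move: h1 => /(proj2 (cleanup_induced Hc t1 t2)) /(proj1 (HT t1 t2)) h1.
move: h2 => /(proj2 (cleanup_induced Hc t2 t3)) /(proj1 (HT t2 t3)) h2.
exact: t_trans h1 h2.
Qed.

End Aux.

Theorem mainTheorem4 (Tx : taxonomies) (F0 : sformula Tx) (X : seq op)
    (G H : formula Tx) :
  well_formed F0 ->
  run (X ++ [:: OpT]) (sem F0) G ->
  run [:: OpS; OpT] G H ->
  forall t1 t2 : ttuple Tx,
    strict (induced G) t1 t2 -> strict (induced H) t1 t2.
Proof.
move=> _ hrun hrun2 t1 t2 [h12 hn].
have [F' [_ hstep]] := run_last _ _ hrun.
have Gtr := stepT_trans hstep.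
inversion hrun2 as [|o1 X1 F1 G2 H1 hs hr]; subst.
inversion hr as [|o2 X2 F2 G4 H2 hs2 hr2]; subst. inversion hr2; subst.
move: hs => [G1 [HS Hc1]]. move: hs2 => [G3 [HT Hc3]].
have [S1 S2] := S_rounds_prop HS.
have sub2 : forall a b, induced G2 a b -> induced G a b.
  by move=> a b /(proj2 (cleanup_induced Hc1 a b)) /S1.
have subH : forall a b, induced H a b -> induced G a b.
  move=> a b /(proj2 (cleanup_induced Hc3 a b)) /(proj1 (HT a b)) h.
  elim: h => [x y /sub2 //|x y z _ h1 _ h2]; exact: Gtr h1 h2.
split.
- apply: (proj1 (cleanup_induced Hc3 t1 t2)); apply: (proj2 (HT t1 t2)); apply: t_step.
  apply: (proj1 (cleanup_induced Hc1 t1 t2)); exact: S2.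
- by move/subH.
Qed.
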